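(* Let $n \geq 1$ and $m \geq 1$ be integers, and let $p:\mathbb{C} \rightarrow \mathbb{C}$ be a polynomial of degree $n+m$ whose roots (listed with multiplicity) are $a_1, \dots, a_{n+m}$, where $|a_i| \leq 1$ for $1 \leq i \leq n$ (these $n$ roots lie inside the unit disk) and the remaining $m$ roots $a_{n+1}, \dots, a_{n+m}$ lie outside the unit disk. Suppose there is a real number $d$ with $$ \min_{n+1 \leq i \leq n+m}{ |a_i|} \geq d > 1 + \frac{2 m}{n}.$$ Then $p'$ has $n-1$ roots (counted with multiplicity) inside the unit disk and its remaining $m$ roots have modulus at least $\frac{dn - m}{n+m}$, a quantity which is $> 1$.
   Context: Roots of $p$ and of $p'$ are counted with multiplicity; ''inside the unit disk'' means in the closed disk $\{z : |z| \leq 1\}$. *)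

(* Defs.v *)
From mathcomp Require Import all_boot all_order all_algebra.
From mathcomp Require Import reals complex.

(* Main.v *)
Require Import Defs.
From mathcomp Require Import all_boot all_order all_algebra.
From mathcomp Require Import reals complex.
From mathcomp Require Import ring lra zify.
Set Implicit Arguments.
Unset Strict Implicit.
Unset Printing Implicit Defensive.
Import Order.TTheory GRing.Theory Num.Theory.
Local Open Scope ring_scope.

Lemma logder (F : fieldType) (t : seq F) (x : F) : all (fun w => x != w) t ->
  (\prod_(w <- t) ('X - w%:P))^`().[x] =
  (\prod_(w <- t) ('X - w%:P)).[x] * \sum_(w <- t) (x - w)^-1.
Proof.
elim: t => [|w t IH]; first by rewrite !big_nil mulr0 -polyC1 derivC horner0.
rewrite /= => /andP[xw /IH {}IH].
rewrite !big_cons derivM derivXsubC !hornerE IH mulrDr.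
have xw0 : x - w != 0 by rewrite subr_eq0.
congr (_ + _); last by rewrite mulrA.
by rewrite mulrC mulKf.
Qed.

Lemma sum1_seq (F : pzSemiRingType) (T : Type) (Z : seq T) :
  \sum_(z <- Z) (1 : F) = (size Z)%:R.
Proof.
by elim: Z => [|z Z IH]; rewrite ?big_nil ?big_cons ?IH //= mulrS.
Qed.

Lemma sumZ (F : fieldType) (N : nat) (A : F) (Z : seq F) (w : F) :
  (0 < N)%N -> 'X^N - A%:P = \prod_(z <- Z) ('X - z%:P) -> w ^+ N != A ->
  \sum_(z <- Z) z / (z - w) = N%:R * A / (A - w ^+ N).
Proof.
move=> N0 qE wA.
have sZ : size Z = N.
  by have := size_XnsubC A N0; rewrite qE size_prod_XsubC => -[].
have allZ : all (fun z => w != z) Z.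
  apply/allP => z zZ; apply: contra wA => /eqP wz.
  have : root ('X^N - A%:P) z by rewrite qE root_prod_XsubC.
  by rewrite wz rootE !hornerE subr_eq0.
have := @logder _ Z w allZ; rewrite -qE derivB derivXn derivC subr0 !hornerE.
rewrite hornerMn hornerXn => H.
have e : \sum_(z <- Z) z / (z - w) = \sum_(z <- Z) (1 - w * (w - z)^-1).
  apply: eq_big_seq => z zZ.
  have zw : w - z != 0.
    by rewrite subr_eq0; move/allP: allZ => /(_ z zZ).
  have zw' : z - w != 0 by rewrite -oppr_eq0 opprB.
  field; rewrite zw' /=; apply/andP; split => //.
rewrite e big_split /= sum1_seq sZ sumrN -mulr_sumr.
have wA0 : w ^+ N - A != 0 by rewrite subr_eq0.
have -> : \sum_(i <- Z) (w - i)^-1 = w ^+ N.-1 *+ N / (w ^+ N - A).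
  by rewrite H mulrC mulKf.
have wN : w ^+ N = w * w ^+ N.-1 by rewrite -exprS prednK.
have AwN : A - w ^+ N != 0 by rewrite subr_eq0 eq_sym.
rewrite wN in wA0 AwN *; rewrite -mulr_natr.
by field; rewrite wA0 AwN.
Qed.

Definition SN (F : fieldType) (Z : seq F) (H : {poly F}) :=
  \sum_(z <- Z) z * H^`().[z] / H.[z].

Lemma rootsZ (F : fieldType) (N : nat) (A : F) (Z : seq F) z :
  'X^N - A%:P = \prod_(z <- Z) ('X - z%:P) -> z \in Z -> z ^+ N = A.
Proof.
move=> qE zZ; have : root ('X^N - A%:P) z by rewrite qE root_prod_XsubC.
by rewrite rootE !hornerE subr_eq0 => /eqP.
Qed.

Lemma SN_roots (F : fieldType) (N : nat) (A : F) (Z : seq F) (c : F) (t : seq F) :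
  (0 < N)%N -> 'X^N - A%:P = \prod_(z <- Z) ('X - z%:P) -> c != 0 ->
  all (fun w => w ^+ N != A) t ->
  SN Z (c *: \prod_(w <- t) ('X - w%:P)) = \sum_(w <- t) N%:R * A / (A - w ^+ N).
Proof.
move=> N0 qE c0 tA.
rewrite /SN.
have -> : \sum_(z <- Z) z * (c *: \prod_(w <- t) ('X - w%:P))^`().[z] /
      (c *: \prod_(w <- t) ('X - w%:P)).[z] =
   \sum_(z <- Z) \sum_(w <- t) z / (z - w).
  apply: eq_big_seq => z zZ.
  have zN := rootsZ qE zZ.
  have allz : all (fun w => z != w) t.
    apply/allP => w wt; apply: contraTneq (allP tA w wt) => <-.
    by rewrite zN eqxx.
  have P0 : (\prod_(w <- t) ('X - w%:P)).[z] != 0.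
    by rewrite -/(root _ z) root_prod_XsubC; apply/negP => /(allP allz); rewrite eqxx.
  rewrite derivZ !hornerZ (@logder _ t z allz).
  move: P0; set P := (\prod_(w <- t) _).[z]; set S := \sum_(w <- t) _ => P0.
  have -> : z * (c * (P * S)) / (c * P) = z * S by field; rewrite c0 P0.
  by rewrite mulr_sumr.
rewrite exchange_big /=.
apply: eq_big_seq => w wt; apply: sumZ => //.
exact: (allP tA).
Qed.

Local Open Scope complex_scope.

Definition nr (R : rcfType) (w : R[i]) : R :=
  Num.sqrt (complex.Re w ^+ 2 + complex.Im w ^+ 2).

Lemma nrE (R : rcfType) (w : R[i]) : `|w| = (nr w)%:C.
Proof. exact: normc_def. Qed.

Lemma nr_ge0 (R : rcfType) (w : R[i]) : 0 <= nr w.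
Proof. exact: sqrtr_ge0. Qed.

Lemma nrM (R : rcfType) (x y : R[i]) : nr (x * y) = nr x * nr y.
Proof. apply: complexI; rewrite rmorphM /=; have h := normrM x y; rewrite !nrE in h; exact h. Qed.

Lemma nrV (R : rcfType) (x : R[i]) : nr (x^-1) = (nr x)^-1.
Proof.
apply: complexI; rewrite fmorphV /=; have h := normfV x; rewrite !nrE in h; exact h.
Qed.

Lemma nrX (R : rcfType) (x : R[i]) n : nr (x ^+ n) = (nr x) ^+ n.
Proof.
apply: complexI; rewrite rmorphXn /=; have h := normrX n x; rewrite !nrE in h; exact h.
Qed.

Lemma nrB (R : rcfType) (x y : R[i]) : nr x - nr y <= nr (x - y).
Proof.
rewrite -lecR rmorphB /=; have h := lerB_dist x y; rewrite !nrE in h; exact h.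
Qed.

Lemma nrD (R : rcfType) (x y : R[i]) : nr (x + y) <= nr x + nr y.
Proof.
rewrite -lecR rmorphD /=; have h := ler_normD x y; rewrite !nrE in h; exact h.
Qed.

Lemma nrN (R : rcfType) (x : R[i]) : nr (- x) = nr x.
Proof. apply: complexI; have h := normrN x; rewrite !nrE in h; exact h. Qed.

Lemma nrC (R : rcfType) (a : R) : nr a%:C = `|a|.
Proof.
by rewrite /nr /= expr0n /= addr0 sqrtr_sqr.
Qed.

Lemma nr0 (R : rcfType) (x : R[i]) : (nr x == 0) = (x == 0).
Proof.
have h := normr_eq0 x; rewrite nrE in h; rewrite -h.
by apply/eqP/eqP => [->|[]].
Qed.

Lemma nr_Re (R : rcfType) (x : R[i]) : `|complex.Re x| <= nr x.
Proof. by rewrite -lecR; have h := normc_ge_Re x; rewrite nrE in h; exact h. Qed.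



Definition ind (R : rcfType) (w : R[i]) : R[i] := if nr w <= 1 then 1 else 0.

Lemma term_bound (R : rcfType) (N : nat) (rho r K : R) (w : R[i]) :
  0 < K -> 1 < rho -> 0 < r -> K + 1 <= rho ^+ N -> (K + 1) * rho ^+ N <= r ^+ N ->
  (nr w <= 1) || (r <= nr w) ->
  nr ((rho ^+ N)%:C / ((rho ^+ N)%:C - w ^+ N) - ind w) <= K^-1.
Proof.
move=> K0 rho1 r0 hK hr hw.
have rN0 : 0 < rho ^+ N by apply: exprn_gt0; lra.
have nA : nr (rho ^+ N)%:C = rho ^+ N by rewrite nrC ger0_norm // ltW.
have x0 := nr_ge0 w.
set A := (rho ^+ N)%:C in nA *; set W := w ^+ N.
have nW : nr W = nr w ^+ N by rewrite /W nrX.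
have D1 : rho ^+ N - nr W <= nr (A - W) by rewrite -nA; apply: nrB.
have D2 : nr W - rho ^+ N <= nr (A - W).
  have -> : nr (A - W) = nr (W - A) by rewrite -opprB nrN.
  by rewrite -nA; apply: nrB.
have Kinv : 0 < K^-1 by rewrite invr_gt0.
have KK : K^-1 * K = 1 by rewrite mulVf // gt_eqF.
rewrite /ind; case: ifP => h.
  have y1 : nr W <= 1 by rewrite nW exprn_ile1.
  have DK : K <= nr (A - W) by lra.
  have AW : A - W != 0 by rewrite -nr0; apply/eqP => e; rewrite e in DK; lra.
  have -> : A / (A - W) - 1 = W / (A - W) by field.
  rewrite nrM nrV ler_pdivrMr; last by lra.
  have : K^-1 * K <= K^-1 * nr (A - W) by rewrite ler_wpM2l // ltW.
  nra.
have rw : r <= nr w by move: hw; rewrite h.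
have yr : r ^+ N <= nr W by rewrite nW lerXn2r // ?nnegrE ltW.
have DK : K * rho ^+ N <= nr (A - W) by nra.
have AW : A - W != 0.
  rewrite -nr0; apply/eqP => e; rewrite e in DK.
  have : 0 < K * rho ^+ N by apply: mulr_gt0.
  lra.
rewrite subr0 nrM nrV nA ler_pdivrMr; last by rewrite lt_neqAle eq_sym nr0 AW nr_ge0.
have : K^-1 * (K * rho ^+ N) <= K^-1 * nr (A - W) by rewrite ler_wpM2l // ltW.
rewrite mulrA KK mul1r; nra.
Qed.

Lemma nr_sum (R : rcfType) (T : Type) (t : seq T) (f : T -> R[i]) :
  nr (\sum_(w <- t) f w) <= \sum_(w <- t) nr (f w).
Proof.
elim: t => [|w t IH]; first by rewrite !big_nil -(rmorph0 (real_complex R)) nrC normr0.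
rewrite !big_cons; apply: le_trans (nrD _ _) _; exact: lerD.
Qed.

Lemma nr_nat (R : rcfType) (n : nat) : nr (n%:R : R[i]) = n%:R.
Proof. by rewrite -(rmorph_nat (real_complex R)) nrC ger0_norm. Qed.

Lemma count_ind (R : rcfType) (t : seq R[i]) :
  (count (fun w => nr w <= 1) t)%:R = \sum_(w <- t) ind w.
Proof.
elim: t => [|w t IH]; first by rewrite big_nil.
rewrite big_cons /= natrD IH /ind; congr (_ + _); by case: ifP.
Qed.

Lemma closeness (R : rcfType) (N : nat) (rho r K : R) (Z : seq R[i]) (c : R[i])
    (t : seq R[i]) :
  (0 < N)%N -> 'X^N - ((rho ^+ N)%:C)%:P = \prod_(z <- Z) ('X - z%:P) -> c != 0 ->
  0 < K -> 1 < rho -> rho < r -> K + 1 <= rho ^+ N -> (K + 1) * rho ^+ N <= r ^+ N ->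
  all (fun w => (nr w <= 1) || (r <= nr w)) t ->
  nr (SN Z (c *: \prod_(w <- t) ('X - w%:P)) -
      N%:R * (count (fun w => nr w <= 1) t)%:R) <= N%:R * (size t)%:R / K.
Proof.
move=> N0 qE c0 K0 rho1 rhor hK hr ht.
have tA : all (fun w => w ^+ N != (rho ^+ N)%:C) t.
  apply/allP => w wt; apply/eqP => e.
  have : nr (w ^+ N) = nr (rho ^+ N)%:C by rewrite e.
  rewrite nrX nrC ger0_norm; last by apply: exprn_ge0; lra.
  have rho0 : 0 <= rho by lra.
  move/eqP; rewrite eqrXn2 // ?nr_ge0 //.
  move/eqP => e2; move/allP: ht => /(_ w wt); rewrite e2; lra.
rewrite (SN_roots N0 qE c0 tA) count_ind mulr_sumr -sumrB.
apply: le_trans (nr_sum _ _) _.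
have -> : N%:R * (size t)%:R / K = \sum_(w <- t) (N%:R / K).
  elim: (t) => [|w s IH]; first by rewrite big_nil mulr0 mul0r.
  by rewrite big_cons -IH /= mulrS mulrDr mulr1 mulrDl.
rewrite big_seq [X in _ <= X]big_seq; apply: ler_sum => w wt.
rewrite -mulrA -mulrBr nrM nr_nat ler_pM2l ?ltr0n //.
apply: (term_bound K0 rho1 _ hK hr (allP ht w wt)); lra.
Qed.
Lemma Re_div (R : rcfType) (x y u v : R) : u ^+ 2 + v ^+ 2 != 0 ->
  complex.Re ((x +i* y) / (u +i* v)) = (x * u + y * v) / (u ^+ 2 + v ^+ 2).
Proof. by move=> h; rewrite /=; field. Qed.

Lemma Re_term_gen (R : rcfType) (w z : R[i]) :
  nr w != nr z ->
  exists rho alpha A q, rho = nr w /\ alpha = nr z /\ 0 < q /\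
   q = rho ^+ 2 - 2 * A + alpha ^+ 2 /\ A <= rho * alpha /\ - (rho * alpha) <= A /\
   complex.Re (w / (w - z)) = (rho ^+ 2 - A) / q.
Proof.
case: w => x y; case: z => u v; rewrite /nr /= => hne.
set rho := Num.sqrt _; set alpha := Num.sqrt _.
have r0 : 0 <= rho := sqrtr_ge0 _.
have a0 : 0 <= alpha := sqrtr_ge0 _.
have r2 : rho ^+ 2 = x ^+ 2 + y ^+ 2 by rewrite sqr_sqrtr // addr_ge0 // sqr_ge0.
have a2 : alpha ^+ 2 = u ^+ 2 + v ^+ 2 by rewrite sqr_sqrtr // addr_ge0 // sqr_ge0.
set A := x * u + y * v.
have CS : A ^+ 2 <= (rho * alpha) ^+ 2.
  rewrite exprMn r2 a2 /A; have := sqr_ge0 (x * v - y * u); nra.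
have ra0 : 0 <= rho * alpha by apply: mulr_ge0.
have hA : `|A| <= rho * alpha.
  by rewrite -(ger0_norm ra0) -ler_sqr ?nnegrE ?normr_ge0 // !real_normK ?num_real.
have q0 : 0 < (x - u) ^+ 2 + (y - v) ^+ 2.
  have : (rho - alpha) ^+ 2 <= (x - u) ^+ 2 + (y - v) ^+ 2.
    have : A <= rho * alpha by apply: le_trans (ler_norm _) hA.
    rewrite /A; nra.
  have : 0 < (rho - alpha) ^+ 2 by rewrite exprn_even_gt0 // subr_eq0.
  lra.
exists rho, alpha, A, ((x - u) ^+ 2 + (y - v) ^+ 2).
split; first by []. split; first by []. split; first by [].
split; first by rewrite r2 a2 /A; ring.
split; first by apply: le_trans (ler_norm _) hA.
split; first by rewrite lerNl; apply: le_trans hA; rewrite -normrN; exact: ler_norm.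
rewrite r2 /A; field; rewrite gt_eqF //.
Qed.

Lemma Re_term_in (R : rcfType) (w z : R[i]) :
  nr z <= 1 -> 1 < nr w -> nr w / (nr w + 1) <= complex.Re (w / (w - z)).
Proof.
move=> hz hw.
have [|rho [alpha [A [q [-> [-> [q0 [qE [hA1 [hA2 ->]]]]]]]]]] := @Re_term_gen _ w z.
  by apply/eqP => e; rewrite e in hw; lra.
have a0 : 0 <= nr z := sqrtr_ge0 _.
rewrite ler_pdivrMr; last by lra.
rewrite mulrAC ler_pdivlMr //.
rewrite qE.
have h1 : 0 <= (nr w - 1) * (A + nr w * nr z) by apply: mulr_ge0; lra.
have h2 : 0 <= nr w * (nr w + nr z) * (1 - nr z) by apply: mulr_ge0; [apply: mulr_ge0|]; lra.
nra.
Qed.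

Lemma Re_term_out (R : rcfType) (w z : R[i]) (d : R) :
  d <= nr z -> nr w < d -> - (nr w / (d - nr w)) <= complex.Re (w / (w - z)).
Proof.
move=> hz hw.
have [|rho [alpha [A [q [-> [-> [q0 [qE [hA1 [hA2 ->]]]]]]]]]] := @Re_term_gen _ w z.
  by apply/eqP => e; rewrite e in hw; lra.
have r0 : 0 <= nr w := sqrtr_ge0 _.
rewrite lerNl -subr_ge0 opprK.
have dr : d - nr w != 0 by rewrite subr_eq0 gt_eqF.
have -> : nr w / (d - nr w) + (nr w ^+ 2 - A) / q =
   ((nr w ^+ 2 - A) * (d - nr w) + nr w * q) / (q * (d - nr w)).
  by field; rewrite dr gt_eqF.
apply: divr_ge0; last by apply: mulr_ge0; lra.
rewrite qE.
have h1 : 0 <= (d + nr w) * (nr w * nr z - A) by apply: mulr_ge0; lra.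
have h2 : 0 <= nr w * (nr z - nr w) * (nr z - d) by apply: mulr_ge0; [apply: mulr_ge0|]; lra.
nra.
Qed.

Lemma Re_sum (R : rcfType) (T : Type) (s : seq T) (f : T -> R[i]) :
  complex.Re (\sum_(x <- s) f x) = \sum_(x <- s) complex.Re (f x).
Proof.
elim: s => [|x s IH]; first by rewrite !big_nil.
by rewrite !big_cons -IH; case: (f x) => ? ?; case: (\sum_(_ <- _) _) => ? ?.
Qed.

Lemma sum_const_seq (R : pzSemiRingType) (T : Type) (s : seq T) (c : R) :
  \sum_(x <- s) c = (size s)%:R * c.
Proof.
elim: s => [|x s IH]; first by rewrite big_nil mul0r.
by rewrite big_cons IH /= mulrS mulrDl mul1r.
Qed.

Lemma annulus (R : rcfType) (n m : nat) (a b : seq R[i]) (d : R) (w : R[i]) :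
  (1 <= n)%N -> size a = n -> size b = m ->
  all (fun z => nr z <= 1) a -> all (fun z => d <= nr z) b ->
  1 + 2 * m%:R / n%:R < d ->
  1 < nr w -> nr w < (d * n%:R - m%:R) / (n + m)%:R ->
  (\prod_(z <- a ++ b) ('X - z%:P))^`().[w] != 0.
Proof.
move=> n1 sa sb ha hb hd w1 wr.
have n0 : (0 : R) < n%:R by rewrite ltr0n.
have m0 : (0 : R) <= m%:R by rewrite ler0n.
have nm0 : (0 : R) < (n + m)%:R by rewrite ltr0n addn_gt0 n1.
have hd' : n%:R + 2 * m%:R < d * n%:R.
  have : (1 + 2 * m%:R / n%:R) * n%:R < d * n%:R by rewrite ltr_pM2r.
  by rewrite mulrDl mul1r divfK // gt_eqF.
have rho0 : 0 <= nr w := nr_ge0 w.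
have rd : nr w < d.
  move: wr; rewrite ltr_pdivlMr // => h; nra.
have rn : nr w * (n + m)%:R < d * n%:R - m%:R by rewrite -ltr_pdivlMr.
rewrite natrD in rn nm0.
set P := \prod_(z <- a ++ b) ('X - z%:P).
have allw : all (fun z => w != z) (a ++ b).
  rewrite all_cat; apply/andP; split; apply/allP => z zs; apply/eqP => e.
    by move/allP: ha => /(_ z zs); rewrite -e; lra.
  by move/allP: hb => /(_ z zs); rewrite -e; lra.
have P0 : P.[w] != 0.
  by rewrite -/(root _ w) root_prod_XsubC; apply/negP => /(allP allw); rewrite eqxx.
rewrite /P (@logder _ _ w allw) mulf_neq0 //.
apply/eqP => S0.
have : complex.Re (\sum_(z <- a ++ b) w / (w - z)) = 0.
  by rewrite -mulr_sumr S0 mulr0.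
rewrite Re_sum big_cat /=.
have La : (size a)%:R * (nr w / (nr w + 1)) <= \sum_(z <- a) complex.Re (w / (w - z)).
  rewrite -sum_const_seq big_seq [X in _ <= X]big_seq; apply: ler_sum => z za.
  by apply: Re_term_in => //; apply: (allP ha).
have Lb : (size b)%:R * (- (nr w / (d - nr w))) <= \sum_(z <- b) complex.Re (w / (w - z)).
  rewrite -sum_const_seq big_seq [X in _ <= X]big_seq; apply: ler_sum => z zb.
  by apply: Re_term_out => //; apply: (allP hb).
rewrite sa sb in La Lb.
have key : 0 < n%:R * (nr w / (nr w + 1)) + m%:R * (- (nr w / (d - nr w))).
  have -> : n%:R * (nr w / (nr w + 1)) + m%:R * (- (nr w / (d - nr w))) =
     nr w * (n%:R * (d - nr w) - m%:R * (nr w + 1)) / ((nr w + 1) * (d - nr w)).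
    by field; rewrite !gt_eqF //; lra.
  apply: divr_gt0; last by apply: mulr_gt0; lra.
  apply: mulr_gt0; first lra.
  nra.
lra.
Qed.

Lemma disk (R : rcfType) (n m : nat) (b : seq R[i]) (d : R) (w : R[i]) :
  (1 <= n)%N -> size b = m -> all (fun z => d <= nr z) b ->
  1 + 2 * m%:R / n%:R < d -> nr w <= 1 ->
  (n%:R *: \prod_(z <- b) ('X - z%:P) + 'X * (\prod_(z <- b) ('X - z%:P))^`()).[w] != 0.
Proof.
move=> n1 sb hb hd w1.
have n0 : (0 : R) < n%:R by rewrite ltr0n.
have m0 : (0 : R) <= m%:R by rewrite ler0n.
have hd' : n%:R + 2 * m%:R < d * n%:R.
  have : (1 + 2 * m%:R / n%:R) * n%:R < d * n%:R by rewrite ltr_pM2r.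
  by rewrite mulrDl mul1r divfK // gt_eqF.
have rho0 : 0 <= nr w := nr_ge0 w.
have allw : all (fun z => w != z) b.
  apply/allP => z zs; apply/eqP => e.
  by move/allP: hb => /(_ z zs); rewrite -e; nra.
set Q := \prod_(z <- b) ('X - z%:P).
have Q0 : Q.[w] != 0.
  by rewrite -/(root _ w) root_prod_XsubC; apply/negP => /(allP allw); rewrite eqxx.
rewrite hornerD hornerZ hornerM hornerX /Q (@logder _ _ w allw) -/Q.
rewrite mulrCA [_%:R * _]mulrC -mulrDr mulf_neq0 //.
rewrite mulr_sumr.
have hS : nr (\sum_(z <- b) w * (w - z)^-1) <= m%:R / (d - 1).
  apply: le_trans (nr_sum _ _) _.
  have -> : m%:R / (d - 1) = \sum_(z <- b) (d - 1)^-1 by rewrite sum_const_seq sb.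
  rewrite big_seq [X in _ <= X]big_seq; apply: ler_sum => z zb.
  have dz := allP hb z zb.
  have D : d - 1 <= nr (z - w) by have := nrB z w; lra.
  rewrite nrM nrV -[w - z]opprB nrN.
  have d1 : 1 < d by nra.
  rewrite ler_pdivrMr; last by lra.
  have i0 : 0 <= (d - 1)^-1 by rewrite invr_ge0; lra.
  have := ler_wpM2l i0 D.
  rewrite mulVf; last by rewrite subr_eq0 gt_eqF.
  lra.
apply/eqP => e.
have : nr (n%:R : R[i]) = nr (- \sum_(z <- b) w * (w - z)^-1).
  by congr nr; apply/eqP; rewrite -addr_eq0 e.
rewrite nrN nr_nat => e2; rewrite -e2 in hS.
move: hS; rewrite ler_pdivlMr; last by nra.
nra.
Qed.

Lemma ivt_aux (R : rcfType) (Ar Br : {poly R}) (M : R) (j : nat) (e : R) :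
  e = 1 \/ e = -1 -> 0 < M -> (forall s, 0 <= s <= 1 -> 0 < Br.[s]) ->
  (forall s, 0 <= s <= 1 -> exists k : nat, `|Ar.[s] / Br.[s] - M * k%:R| <= M / 4%:R) ->
  e * (Ar.[0] / Br.[0] - M * (j%:R + 2%:R^-1)) <= 0 ->
  0 <= e * (Ar.[1] / Br.[1] - M * (j%:R + 2%:R^-1)) -> False.
Proof.
move=> he M0 Bp Hs h0 h1.
set c := M * (j%:R + 2%:R^-1) in h0 h1.
set P := e *: (Ar - c *: Br).
have PE : forall s, 0 <= s <= 1 -> P.[s] = Br.[s] * (e * (Ar.[s] / Br.[s] - c)).
  move=> s hs; have := Bp s hs => B0.
  rewrite /P hornerZ hornerD hornerN hornerZ; field; by rewrite (gt_eqF B0).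
have z1 : 0 <= (0:R) <= 1 by apply/andP; split; lra.
have o1 : 0 <= (1:R) <= 1 by apply/andP; split; lra.
have [s hs] : exists2 s : R, 0 <= s <= 1 & root P s.
  apply: poly_ivt; first exact: ler01.
  rewrite (PE 0 z1) (PE 1 o1); apply/andP; split.
    by rewrite pmulr_rle0 // Bp.
  by rewrite pmulr_rge0 // Bp.
rewrite rootE (PE s hs) mulf_eq0 gt_eqF ?Bp //= mulf_eq0.
have e0 : e != 0 by case: he => ->; rewrite ?oppr_eq0 oner_eq0.
rewrite (negbTE e0) /= subr_eq0 => /eqP Gs.
have [k] := Hs s hs; rewrite Gs /c ler_norml => /andP[k1 k2].
have M4 : 0 < M / 4%:R by apply: divr_gt0.
case: (leqP k j) => hk.
  have : (k%:R : R) <= j%:R by rewrite ler_nat.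
  nra.
have : (j%:R : R) + 1 <= k%:R by rewrite natr1 ler_nat.
nra.
Qed.

Lemma ivt_int (R : rcfType) (Ar Br : {poly R}) (M : R) (k0 k1 : nat) :
  0 < M -> (forall s, 0 <= s <= 1 -> 0 < Br.[s]) ->
  (forall s, 0 <= s <= 1 -> exists k : nat, `|Ar.[s] / Br.[s] - M * k%:R| <= M / 4%:R) ->
  `|Ar.[0] / Br.[0] - M * k0%:R| <= M / 4%:R ->
  `|Ar.[1] / Br.[1] - M * k1%:R| <= M / 4%:R -> k0 = k1.
Proof.
move=> M0 Bp Hs; rewrite !ler_norml => /andP[a0 a1] /andP[b0 b1].
case: (ltngtP k0 k1) => // h.
  have : (k0%:R : R) + 1 <= k1%:R by rewrite natr1 ler_nat.
  move=> hk; exfalso; apply: (@ivt_aux R Ar Br M k0 1 (or_introl erefl) M0 Bp Hs).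
    rewrite mul1r; nra.
  rewrite mul1r; nra.
have : (k1%:R : R) + 1 <= k0%:R by rewrite natr1 ler_nat.
move=> hk; exfalso; apply: (@ivt_aux R Ar Br M k1 (-1) (or_intror erefl) M0 Bp Hs).
  rewrite mulN1r oppr_le0; nra.
rewrite mulN1r oppr_ge0; nra.
Qed.

Lemma ReD (R : rcfType) (x y : R[i]) : complex.Re (x + y) = complex.Re x + complex.Re y.
Proof. by case: x => ? ?; case: y => ? ?. Qed.

Lemma Re_sumI (R : rcfType) (n : nat) (f : 'I_n -> R[i]) :
  complex.Re (\sum_(i < n) f i) = \sum_(i < n) complex.Re (f i).
Proof.
elim/big_rec2: _ => [|i y1 y2 _ <-]; first by [].
by rewrite ReD.
Qed.

Lemma ReMC (R : rcfType) (x : R[i]) (c : R) : complex.Re (x * c%:C) = complex.Re x * c.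
Proof. by case: x => ? ? /=; rewrite mulr0 subr0. Qed.

Lemma Re_eval (R : rcfType) (W : {poly R[i]}) (s : R) :
  (map_poly (@complex.Re R) W).[s] = complex.Re (W.[s%:C]).
Proof.
have hs : (size (map_poly (@complex.Re R) W) <= size W)%N by apply: size_poly.
rewrite (horner_coef_wide _ hs) (horner_coef_wide _ (leqnn _)) Re_sumI.
apply: eq_bigr => i _.
by rewrite coef_map_id0 // -rmorphXn /= ReMC.
Qed.

Lemma conj_eval (R : rcfType) (V : {poly R[i]}) (s : R) :
  (map_poly (@conjc R) V).[s%:C] = (V.[s%:C])^*.
Proof. by rewrite -[in LHS](conjc_real s) horner_map. Qed.

Lemma mulJ (R : rcfType) (x : R[i]) : x * x^* = (nr x ^+ 2)%:C.
Proof. by rewrite rmorphXn /= -nrE sqr_normc. Qed.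

Lemma Re_quot (R : rcfType) (U V : {poly R[i]}) (s : R) : V.[s%:C] != 0 ->
  complex.Re (U.[s%:C] / V.[s%:C]) =
  (map_poly (@complex.Re R) (U * map_poly (@conjc R) V)).[s] /
  (map_poly (@complex.Re R) (V * map_poly (@conjc R) V)).[s].
Proof.
move=> V0.
rewrite !Re_eval !hornerM !conj_eval !mulJ /=.
have n0 : nr V.[s%:C] ^+ 2 != 0 by rewrite expf_eq0 /= nr0.
have -> : U.[s%:C] / V.[s%:C] = U.[s%:C] * V.[s%:C]^* * ((nr V.[s%:C] ^+ 2)^-1)%:C.
  rewrite fmorphV /= -mulJ; field.
  by rewrite V0 /= conjc_eq0 V0.
by rewrite ReMC.
Qed.

Lemma Re_den_pos (R : rcfType) (V : {poly R[i]}) (s : R) : V.[s%:C] != 0 ->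
  0 < (map_poly (@complex.Re R) (V * map_poly (@conjc R) V)).[s].
Proof.
move=> V0; rewrite Re_eval hornerM conj_eval mulJ /=.
by rewrite exprn_even_gt0 //= nr0.
Qed.

Lemma ratfun_sum (R : rcfType) (T : eqType) (Z : seq T) (f g : T -> {poly R[i]}) :
  (forall z s, z \in Z -> 0 <= s <= 1 -> (g z).[s%:C] != 0) ->
  exists U V : {poly R[i]}, forall s, 0 <= s <= 1 ->
    V.[s%:C] != 0 /\
    \sum_(z <- Z) (f z).[s%:C] / (g z).[s%:C] = U.[s%:C] / V.[s%:C].
Proof.
elim: Z => [|z Z IHZ] hg.
  by exists 0, 1 => s _; rewrite big_nil !hornerE oner_eq0 ?mul0r ?divr1.
have [U [V IH]] : exists U V : {poly R[i]}, forall s, 0 <= s <= 1 ->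
    V.[s%:C] != 0 /\
    \sum_(z <- Z) (f z).[s%:C] / (g z).[s%:C] = U.[s%:C] / V.[s%:C].
  by apply: IHZ => z' s zZ hs; apply: hg => //; rewrite inE zZ orbT.
exists (f z * V + g z * U), (g z * V) => s hs.
have [V0 E] := IH s hs; have g0 := hg z s (mem_head _ _) hs.
rewrite big_cons E !hornerE mulf_neq0 //; split => //.
by field; rewrite g0 V0.
Qed.

Lemma prod_const_seq (R : pzSemiRingType) (T : Type) (s : seq T) (c : R) :
  \prod_(x <- s) c = c ^+ size s.
Proof.
elim: s => [|x s IH]; first by rewrite big_nil expr0.
by rewrite big_cons IH /= exprS.
Qed.

Lemma close_re (R : rcfType) (X : R[i]) (N k : nat) (B : R) :
  nr (X - N%:R * k%:R) <= B ->
  `|complex.Re X - N%:R * k%:R| <= B.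
Proof.
move=> h.
have -> : complex.Re X - N%:R * k%:R = complex.Re (X - ((N%:R * k%:R : R))%:C).
  by case: X {h} => x y /=.
apply: le_trans (nr_Re _) _.
by rewrite rmorphM /= !rmorph_nat.
Qed.

Lemma bern (R : realFieldType) (x : R) (N : nat) : 1 <= x -> 1 + N%:R * (x - 1) <= x ^+ N.
Proof.
move=> x1; elim: N => [|N IH]; first by rewrite mul0r addr0 expr0.
rewrite exprS mulrS.
have : x * (1 + N%:R * (x - 1)) <= x * x ^+ N by rewrite ler_wpM2l //; lra.
have : 0 <= N%:R * (x - 1) * (x - 1) by apply: mulr_ge0; [apply: mulr_ge0|]; rewrite ?ler0n; lra.
nra.
Qed.

Lemma pow_big (R : realType) (x B : R) : 1 < x ->
  exists N0 : nat, forall N, (N0 <= N)%N -> B <= x ^+ N.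
Proof.
move=> x1.
have y0 : 0 <= `|B| / (x - 1) by apply: divr_ge0; rewrite ?normr_ge0 //; lra.
exists (Num.Def.archi_bound (`|B| / (x - 1))) => N hN.
have h := archi_boundP y0.
have : (Num.Def.archi_bound (`|B| / (x - 1)))%:R <= N%:R :> R by rewrite ler_nat.
move=> h2.
have h3 : `|B| / (x - 1) * (x - 1) < N%:R * (x - 1) by rewrite ltr_pM2r; lra.
rewrite divfK in h3; last by rewrite subr_eq0 gt_eqF.
have := bern N (ltW x1).
have := ler_norm B.
lra.
Qed.

Lemma size_derivN (R : numDomainType) (p : {poly R}) : size p^`() = (size p).-1.
Proof.
have [lep1|lt1p] := leqP (size p) 1.
  by rewrite {1}[p]size1_polyC // derivC size_poly0 -subn1 (eqnP lep1).
rewrite size_poly_eq // mulrn_eq0 -subn2 -subSn // subn2.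
by rewrite lead_coef_eq0 -size_poly_eq0 -(subnKC lt1p).
Qed.

Lemma eval_fam (R : rcfType) (P2 : {poly {poly R[i]}}) (s : R) (z : R[i]) :
  (map_poly (horner_eval s%:C) P2).[z] = (P2.[z%:P]).[s%:C].
Proof.
have h := horner_map (horner_eval s%:C) P2 z%:P.
have e : horner_eval (s%:C) z%:P = z := hornerC z _.
by move: h; rewrite /= e.
Qed.

Lemma tA_of (R : rcfType) (N : nat) (rho r : R) (t : seq R[i]) :
  (0 < N)%N -> 1 < rho -> rho < r -> all (fun w => (nr w <= 1) || (r <= nr w)) t ->
  all (fun w => w ^+ N != (rho ^+ N)%:C) t.
Proof.
move=> N0 rho1 rhor ht.
apply/allP => w wt; apply/eqP => e.
have : nr (w ^+ N) = nr (rho ^+ N)%:C by rewrite e.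
rewrite nrX nrC ger0_norm; last by apply: exprn_ge0; lra.
have rho0 : 0 <= rho by lra.
move/eqP; rewrite eqrXn2 // ?nr_ge0 //.
move/eqP => e2; move/allP: ht => /(_ w wt); rewrite e2; lra.
Qed.

Lemma nonvan (R : rcfType) (N : nat) (A : R[i]) (Zs : seq R[i]) (c : R[i]) (t : seq R[i]) z :
  'X^N - A%:P = \prod_(z <- Zs) ('X - z%:P) -> c != 0 ->
  all (fun w => w ^+ N != A) t -> z \in Zs ->
  (c *: \prod_(w <- t) ('X - w%:P)).[z] != 0.
Proof.
move=> qE c0 tA zZ; rewrite hornerZ mulf_neq0 //.
rewrite -/(root _ z) root_prod_XsubC; apply/negP => zt.
by move/allP: tA => /(_ z zt); rewrite (rootsZ qE zZ) eqxx.
Qed.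

Lemma roots_good (R : rcfType) (n m : nat) (a b : seq R[i]) (d : R) (c : R[i]) (t : seq R[i]) :
  (1 <= n)%N -> size a = n -> size b = m ->
  all (fun z => nr z <= 1) a -> all (fun z => d <= nr z) b ->
  1 + 2 * m%:R / n%:R < d ->
  (\prod_(z <- a ++ b) ('X - z%:P))^`() = c *: \prod_(w <- t) ('X - w%:P) ->
  all (fun w => (nr w <= 1) || ((d * n%:R - m%:R) / (n + m)%:R <= nr w)) t.
Proof.
move=> n1 sa sb ha hb hd E.
apply/allP => w wt.
have : (\prod_(z <- a ++ b) ('X - z%:P))^`().[w] = 0.
  by rewrite E hornerZ; apply/eqP; rewrite mulf_eq0 -/(root _ w) root_prod_XsubC wt orbT.
move=> e.
case: (leP (nr w) 1) => //= w1.
case: (leP ((d * n%:R - m%:R) / (n + m)%:R) (nr w)) => // wr.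
by have := annulus n1 sa sb ha hb hd w1 wr; rewrite e eqxx.
Qed.

Lemma normle1 (R : rcfType) (z : R[i]) : (`|z| <= 1) = (nr z <= 1).
Proof. by rewrite nrE -lecR. Qed.

Lemma lenorm (R : rcfType) (x : R) (z : R[i]) : (x%:C <= `|z|) = (x <= nr z).
Proof. by rewrite nrE lecR. Qed.

Unset Implicit Arguments.

Theorem theorem1 (R : realType) (n m : nat) (p : {poly R[i]})
    (a b : seq R[i]) (d : R) :
  (1 <= n)%N -> (1 <= m)%N ->
  size p = (n + m).+1 ->
  size a = n -> size b = m ->
  p = lead_coef p *: \prod_(z <- a ++ b) ('X - z%:P) ->
  all (fun z => `|z| <= 1) a ->
  all (fun z => 1 < `|z|) b ->
  all (fun z => d%:C <= `|z|) b ->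
  1 + 2 * m%:R / n%:R < d ->
  1 < (d * n%:R - m%:R) / (n + m)%:R /\
  (forall t : seq R[i],
     p^`() = lead_coef p^`() *: \prod_(w <- t) ('X - w%:P) ->
     count (fun w => `|w| <= 1) t = n.-1 /\
     count (fun w => ((d * n%:R - m%:R) / (n + m)%:R)%:C <= `|w|) t = m).
Proof.
move=> n1 m1 sp sa sb pE ha hb1 hbd hd.
have ha' : all (fun z => nr z <= 1) a.
  by apply/allP => z /(allP ha); rewrite normle1.
have hb' : all (fun z => d <= nr z) b.
  by apply/allP => z /(allP hbd); rewrite lenorm.
have n0 : (0 : R) < n%:R by rewrite ltr0n.
have m0 : (0 : R) <= m%:R by rewrite ler0n.
have nm0 : (0 : R) < (n + m)%:R by rewrite ltr0n addn_gt0 n1.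
have hd' : n%:R + 2 * m%:R < d * n%:R.
  have : (1 + 2 * m%:R / n%:R) * n%:R < d * n%:R by rewrite ltr_pM2r.
  by rewrite mulrDl mul1r divfK // gt_eqF.
have d1 : 1 < d by nra.
set r := (d * n%:R - m%:R) / (n + m)%:R.
have r1 : 1 < r.
  by rewrite /r ltr_pdivlMr // mul1r natrD; lra.
split => // t ht.
set rho := (1 + r) / 2%:R.
have rho1 : 1 < rho by rewrite /rho; lra.
have rhor : rho < r by rewrite /rho; lra.
set K : R := 4%:R * (n + m)%:R.
have K0 : 0 < K by rewrite /K; apply: mulr_gt0 => //; rewrite ltr0n.
have [N1 hN1] := pow_big (K + 1) rho1.
have rr1 : 1 < r / rho by rewrite ltr_pdivlMr ?mul1r //; lra.
have [N2 hN2] := pow_big (K + 1) rr1.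
set N := (maxn N1 N2).+1.
have N0 : (0 < N)%N by [].
have hK : K + 1 <= rho ^+ N by apply: hN1; rewrite /N leqW // leq_maxl.
have hr : (K + 1) * rho ^+ N <= r ^+ N.
  have h2 : K + 1 <= (r / rho) ^+ N by apply: hN2; rewrite /N leqW // leq_maxr.
  have -> : r ^+ N = (r / rho) ^+ N * rho ^+ N by rewrite -exprMn divfK // gt_eqF //; lra.
  by rewrite ler_pM2r // exprn_gt0 //; lra.
have [Zs qE] : exists Zs : seq R[i],
    'X^N - ((rho ^+ N)%:C)%:P = \prod_(z <- Zs) ('X - z%:P).
  case: (closed_field_poly_normal ('X^N - ((rho ^+ N)%:C)%:P)) => Zs E.
  by exists Zs; rewrite {1}E (monicP (monicXnsubC _ N0)) scale1r.
pose PP : {poly {poly R[i]}} :=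
  \prod_(x <- a) ('X - (x *: 'X)%:P) * \prod_(y <- b) ('X - (y%:P)%:P).
pose ps (s : R) := map_poly (horner_eval (s%:C)) PP.
have psE : forall s : R, ps s = \prod_(z <- map (fun x => x * s%:C) a ++ b) ('X - z%:P).
  move=> s; rewrite /ps /PP rmorphM !rmorph_prod big_cat big_map /=.
  congr (_ * _); apply: eq_bigr => x _; rewrite map_polyXsubC /= horner_evalE.
    by rewrite hornerZ hornerX.
  by rewrite hornerC.
have cfg_s : forall s : R, 0 <= s <= 1 -> size (map (fun x => x * s%:C) a) = n.
  by move=> s _; rewrite size_map.
have cfg_a : forall s : R, 0 <= s <= 1 -> all (fun z => nr z <= 1) (map (fun x => x * s%:C) a).
  move=> s /andP[s0 s1]; apply/allP => z /mapP[x xa ->].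
  rewrite nrM nrC ger0_norm //.
  have := allP ha' x xa; have := nr_ge0 x; nra.
have sized : forall s, size (ps s)^`() = (n + m)%N.
  by move=> s; rewrite size_derivN psE size_prod_XsubC size_cat size_map sa sb.
have Hs : forall s : R, 0 <= s <= 1 -> exists (c : R[i]) (ts : seq R[i]),
    [/\ c != 0, (ps s)^`() = c *: \prod_(w <- ts) ('X - w%:P), size ts = (n + m).-1 &
     all (fun w => (nr w <= 1) || (r <= nr w)) ts].
  move=> s hs.
  case: (closed_field_poly_normal ((ps s)^`())) => ts E.
  have c0 : lead_coef (ps s)^`() != 0.
    by rewrite lead_coef_eq0 -size_poly_eq0 sized addn_eq0 negb_and -lt0n n1.
  exists (lead_coef (ps s)^`()), ts; split => //.
    by have := sized s; rewrite E size_scale // size_prod_XsubC => <-.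
  apply: (roots_good n1 (cfg_s s hs) sb (cfg_a s hs) hb' hd).
  by rewrite -psE; exact: E.
pose E1 z := (PP^`()).[z%:P].
pose E2 z := (PP^`()^`()).[z%:P].
have SNE : forall s : R, SN Zs (ps s)^`() =
    \sum_(z <- Zs) (z *: E2 z).[s%:C] / (E1 z).[s%:C].
  by move=> s; rewrite /SN; apply: eq_bigr => z _; rewrite /ps !deriv_map !eval_fam hornerZ.
have nv : forall z (s : R), z \in Zs -> 0 <= s <= 1 -> (E1 z).[s%:C] != 0.
  move=> z s zZ hs; have [c [ts [c0 E _ good]]] := Hs s hs.
  have := nonvan qE c0 (tA_of N0 rho1 rhor good) zZ.
  by rewrite -E /ps deriv_map eval_fam.
have [U [V HUV]] := @ratfun_sum R _ Zs (fun z => z *: E2 z) E1 nv.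
pose Ar := map_poly (@complex.Re R) (U * map_poly (@conjc R) V).
pose Br := map_poly (@complex.Re R) (V * map_poly (@conjc R) V).
have GE : forall s : R, 0 <= s <= 1 -> complex.Re (SN Zs (ps s)^`()) = Ar.[s] / Br.[s].
  by move=> s hs; have [V0 E] := HUV s hs; rewrite SNE E Re_quot.
have Bp : forall s : R, 0 <= s <= 1 -> 0 < Br.[s].
  by move=> s hs; have [V0 E] := HUV s hs; apply: Re_den_pos.
have close : forall (s : R) (c : R[i]) (ts : seq R[i]), c != 0 ->
    (ps s)^`() = c *: \prod_(w <- ts) ('X - w%:P) -> (size ts <= n + m)%N ->
    all (fun w => (nr w <= 1) || (r <= nr w)) ts ->
    `|complex.Re (SN Zs (ps s)^`()) - N%:R * (count (fun w => nr w <= 1) ts)%:R|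
      <= N%:R / 4%:R.
  move=> s c ts c0 E szt good; apply: close_re; rewrite E.
  apply: le_trans (closeness N0 qE c0 K0 rho1 rhor hK hr good) _.
  rewrite -mulrA ler_pM2l ?ltr0n //.
  rewrite ler_pdivrMr // /K mulrA mulVf ?mul1r ?ler_nat //.
  by rewrite pnatr_eq0.
have z01 : 0 <= (0 : R) <= 1 by apply/andP; split; lra.
have o01 : 0 <= (1 : R) <= 1 by apply/andP; split; lra.
have ps1 : ps 1 = \prod_(z <- a ++ b) ('X - z%:P).
  rewrite psE; congr (\prod_(z <- _ ++ _) _); rewrite rmorph1.
  by rewrite (eq_map (fun x => mulr1 x)) map_id.
have p0 : lead_coef p != 0 by rewrite lead_coef_eq0 -size_poly_eq0 sp.
have sdp : size p^`() = (n + m)%N by rewrite size_derivN sp.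
have dp0 : lead_coef p^`() != 0.
  by rewrite lead_coef_eq0 -size_poly_eq0 sdp addn_eq0 negb_and -lt0n n1.
have Ep1 : (ps 1)^`() = ((lead_coef p)^-1 * lead_coef p^`()) *: \prod_(w <- t) ('X - w%:P).
  have e : p^`() = lead_coef p *: (ps 1)^`() by rewrite ps1 {1}pE derivZ.
  have e2 : lead_coef p^`() *: \prod_(w <- t) ('X - w%:P) = lead_coef p *: (ps 1)^`().
    by rewrite -ht.
  by rewrite -scalerA e2 scalerA mulVf // scale1r.
have c10 : (lead_coef p)^-1 * lead_coef p^`() != 0 by rewrite mulf_neq0 // invr_eq0.
have szt : size t = (n + m).-1.
  by have := sdp; rewrite ht size_scale // size_prod_XsubC => <-.
have goodt : all (fun w => (nr w <= 1) || (r <= nr w)) t.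
  by apply: (roots_good n1 sa sb ha' hb' hd); rewrite -ps1; exact: Ep1.
have szt' : (size t <= n + m)%N by rewrite szt leq_pred.
have cl1 := close 1 _ t c10 Ep1 szt' goodt.
set Q := \prod_(z <- b) ('X - z%:P).
have ps0 : ps 0 = 'X^n * Q.
  rewrite psE big_cat big_map /= rmorph0.
  congr (_ * _); rewrite -sa -prod_const_seq.
  by apply: eq_bigr => x _; rewrite mulr0 subr0.
set F := n%:R *: Q + 'X * Q^`().
have dps0 : (ps 0)^`() = 'X^(n.-1) * F.
  have hX : ('X^n : {poly R[i]}) = 'X^(n.-1) * 'X by rewrite -exprSr prednK.
  rewrite ps0 derivM derivXn /F mulrDr scaler_nat hX.
  by rewrite mulrnAl mulrnAr !mulrA.
have F0 : F != 0.
  apply/eqP => F0.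
  have h0 : nr (0 : R[i]) <= 1.
    by rewrite -(rmorph0 (real_complex R)) nrC normr0 ler01.
  by have := @disk R n m b d 0 n1 sb hb' hd h0; rewrite -/Q -/F F0 horner0 eqxx.
case: (closed_field_poly_normal F) => t2 Et2.
have lc2 : lead_coef F != 0 by rewrite lead_coef_eq0.
set t0 := nseq n.-1 0 ++ t2.
have Ep0 : (ps 0)^`() = lead_coef F *: \prod_(w <- t0) ('X - w%:P).
  rewrite dps0 {1}Et2 big_cat /= -scalerAr.
  congr (_ *: (_ * _)).
  rewrite (eq_big_seq (fun _ => 'X)); last first.
    by move=> z /nseqP[-> _]; rewrite subr0.
  by rewrite prod_const_seq size_nseq.
have szt0 : (size t0 <= n + m)%N.
  by have := sized 0; rewrite Ep0 size_scale // size_prod_XsubC => <-.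
have goodt0 : all (fun w => (nr w <= 1) || (r <= nr w)) t0.
  apply: (roots_good n1 (cfg_s 0 z01) sb (cfg_a 0 z01) hb' hd).
  by rewrite -psE; exact: Ep0.
have ct0 : count (fun w => nr w <= 1) t0 = n.-1.
  rewrite count_cat count_nseq /=.
  have -> : nr (0 : R[i]) <= 1.
    by rewrite -(rmorph0 (real_complex R)) nrC normr0 ler01.
  rewrite mul1n.
  suff -> : count (fun w => nr w <= 1) t2 = 0%N by rewrite addn0.
  apply/eqP; rewrite -leqn0 leqNgt -has_count; apply/hasPn => w wt.
  apply/negP => w1.
  have := @disk R n m b d w n1 sb hb' hd w1; rewrite -/Q -/F.
  by rewrite {1}Et2 hornerZ mulf_eq0 -/(root _ w) root_prod_XsubC wt orbT.
have cl0 := close 0 _ t0 lc2 Ep0 szt0 goodt0.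
rewrite ct0 in cl0.
have Hk : forall s : R, 0 <= s <= 1 ->
    exists k : nat, `|Ar.[s] / Br.[s] - N%:R * k%:R| <= N%:R / 4%:R.
  move=> s hs; have [c [ts [c0 E szs good]]] := Hs s hs.
  exists (count (fun w => nr w <= 1) ts); rewrite -GE //.
  by apply: (close s c ts c0 E _ good); rewrite szs leq_pred.
have M0 : (0 : R) < N%:R by rewrite ltr0n.
rewrite (GE 0 z01) in cl0; rewrite (GE 1 o01) in cl1.
have kk := ivt_int M0 Bp Hk cl0 cl1.
have c1 : count (fun w => `|w| <= 1) t = n.-1.
  by rewrite (eq_count (fun w => normle1 w)) kk.
split => //.
rewrite (eq_count (fun w => lenorm r w)).
have -> : count (fun w => r <= nr w) t = count (predC (fun w => nr w <= 1)) t.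
  apply: eq_in_count => w wt /=.
  have := allP goodt w wt.
  case: (leP (nr w) 1) => /= h; last by [].
  by move=> _; apply/negbTE; rewrite -ltNge; lra.
have := count_predC (fun w => nr w <= 1) t; rewrite -kk szt.
move: n1; clear; lia.
Qed.
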